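(* Let $I$ be a quasiconcave function and put $\widetilde I(t)=t/I(t)$. Then (i) $T_I$ is bounded on $m_{\widetilde I}$, i.e. $\|T_If\|_{m_{\widetilde I}}\lesssim\|f\|_{m_{\widetilde I}}$ for $f\in\mathcal M_+(0,1)$; (ii) $T_I$ is bounded on $L^1$ if and only if $\int_0^t\frac{I(s)}{s}ds\lesssim I(t)$ for $t\in(0,1)$.
   Context: A quasiconcave function is a nondecreasing bijection $I:(0,1)\to(0,1)$ with $I(0+)=0$, $I(1-)=1$ and $t\mapsto I(t)/t$ nonincreasing. $\mathcal M_+(0,1)$: nonnegative measurable functions on $(0,1)$; $f^*$: nonincreasing rearrangement. $T_If(t)=\frac{I(t)}{t}\sup_{t\le s<1}\frac{s}{I(s)}f^*(s)$. For a nondecreasing $J$, $\|f\|_{m_J}=\sup_{0<t<1}J(t)f^*(t)$. $A\lesssim B$ means $A\le CB$ with $C$ independent of $f$ and $t$. *)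

(* Defs.v *)
From HB Require Import structures.
From mathcomp Require Import all_boot all_order all_algebra.
From mathcomp Require Import all_classical all_reals all_analysis.
From mathcomp Require Import measurable_realfun.
Set Implicit Arguments. Unset Strict Implicit. Unset Printing Implicit Defensive.
Import Order.TTheory GRing.Theory Num.Theory.
Import numFieldNormedType.Exports.
Local Open Scope classical_set_scope.
Local Open Scope ring_scope.
Local Open Scope ereal_scope.

Section Defs.
Variable R : realType.
Notation mu := (@lebesgue_measure R).

Definition I01 : set R := `]0%R, 1%R[.

Definition quasiconcave (I : R -> R) : Prop :=
  (forall t, (0 < t < 1)%R -> (0 < I t < 1)%R) /\
  {in `]0%R, 1%R[ &, injective I} /\
  (forall u, (0 < u < 1)%R -> exists2 t, (0 < t < 1)%R & I t = u) /\
  {in `]0%R, 1%R[ &, forall s t, (s <= t)%R -> (I s <= I t)%R} /\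
  (I x @[x --> (0:R)^'+] --> (0:R))%R /\
  (I x @[x --> (1:R)^'-] --> (1:R))%R /\
  {in `]0%R, 1%R[ &, forall s t, (s <= t)%R -> (I t / t <= I s / s)%R}.

Definition Mplus (f : R -> \bar R) : Prop :=
  measurable_fun I01 f /\ (forall x, (0 < x < 1)%R -> 0 <= f x).

Definition distf (f : R -> \bar R) (l : R) : \bar R :=
  mu (I01 `&` [set x | l%:E < f x]).

Definition rearr (f : R -> \bar R) (t : R) : \bar R :=
  ereal_inf [set l%:E | l in [set l : R | (0 <= l)%R /\ distf f l <= t%:E]].

Definition TI (I : R -> R) (f : R -> \bar R) (t : R) : \bar R :=
  (I t / t)%:E *
  ereal_sup [set (s / I s)%:E * rearr f s | s in [set s : R | (t <= s < 1)%R]].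

Definition mnorm (J : R -> R) (f : R -> \bar R) : \bar R :=
  ereal_sup [set (J t)%:E * rearr f t | t in I01].

Definition L1norm (f : R -> \bar R) : \bar R :=
  \int[mu]_(x in I01) f x.

Definition Itilde (I : R -> R) (t : R) : R := (t / I t)%R.

End Defs.

(* Main.v *)
Require Import Defs.
From HB Require Import structures.
From mathcomp Require Import all_boot all_order all_algebra.
From mathcomp Require Import all_classical all_reals all_analysis.
From mathcomp Require Import measurable_realfun.
From mathcomp Require Import ring lra.
Import Order.TTheory GRing.Theory Num.Theory.
Import numFieldNormedType.Exports.
Local Open Scope classical_set_scope.
Local Open Scope ring_scope.
Local Open Scope ereal_scope.
Section Rearr.
Context {R : realType}.
Notation mu := (@lebesgue_measure R).

Lemma rearr_ge0 (f : R -> \bar R) s : 0 <= rearr f s.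
Proof.
apply: le_ereal_inf_tmp => _ [l [l0 _] <-]; by rewrite lee_fin.
Qed.

Lemma rearr_le {f : R -> \bar R} {s l} : (0 <= l)%R -> distf f l <= s%:E ->
  rearr f s <= l%:E.
Proof. by move=> l0 hl; apply: ereal_inf_lbound; exists l. Qed.

Lemma rearr_gt (f : R -> \bar R) s l : (0 <= l)%R -> l%:E < rearr f s ->
  s%:E < distf f l.
Proof.
move=> l0 h; rewrite ltNge; apply/negP => hd.
by have := rearr_le l0 hd; rewrite leNgt h.
Qed.

Lemma measI01 : measurable (@I01 R).
Proof. exact: measurable_itv. Qed.

Lemma mu_I01 : mu (@I01 R) = 1.
Proof. by rewrite /I01 lebesgue_measure_itv /= lte_fin ltr01 sube0. Qed.

Lemma mu_itv0 (a : R) : (0 <= a)%R -> mu `]0%R, a[ = a%:E.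
Proof.
move=> a0; rewrite lebesgue_measure_itv /= lte_fin.
case: ltP => [_|h]; first by rewrite sube0.
by have -> : a = 0%R by apply/eqP; rewrite eq_le h a0.
Qed.

Lemma meas_level (f : R -> \bar R) (l : R) : measurable_fun (@I01 R) f ->
  measurable (@I01 R `&` [set x | l%:E < f x]).
Proof.
move=> mf.
have -> : @I01 R `&` [set x | l%:E < f x] = @I01 R `&` f @^-1` `]l%:E, +oo]%classic.
  apply/seteqP; split => x /= [h1 h2]; split => //.
    by rewrite in_itv /= h2 leey.
  by move: h2; rewrite in_itv /= => /andP[].
apply: mf; [exact: measI01 | exact: emeasurable_itv].
Qed.

Lemma distf_ge0 (f : R -> \bar R) l : 0 <= distf f l.
Proof. exact: measure_ge0. Qed.

Lemma distf_le1 {f : R -> \bar R} l : measurable_fun (@I01 R) f -> distf f l <= 1.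
Proof.
move=> mf; rewrite /distf -mu_I01; apply: le_measure.
- by rewrite inE; exact: meas_level.
- by rewrite inE; exact: measI01.
- by move=> x [].
Qed.

Lemma distf_fin (f : R -> \bar R) l : measurable_fun (@I01 R) f ->
  distf f l = (fine (distf f l))%:E.
Proof.
move=> mf; rewrite fineK // ge0_fin_numE ?distf_ge0 //.
by apply: (le_lt_trans (distf_le1 l mf)); rewrite ltry.
Qed.

End Rearr.
Lemma ler_frac (R : realFieldType) (a b c d : R) : (0 < b)%R -> (0 < d)%R ->
  (a / b <= c / d)%R = (a * d <= c * b)%R.
Proof. by move=> b0 d0; rewrite ler_pdivrMr // mulrAC ler_pdivlMr. Qed.

Section QC.
Context {R : realType} (I : R -> R) (hI : quasiconcave I).

Lemma in01 (t : R) : (0 < t)%R -> (t < 1)%R -> t \in `]0%R, 1%R[.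
Proof. by move=> ? ?; rewrite in_itv /= ; apply/andP. Qed.

Lemma qI_pos {t} : (0 < t)%R -> (t < 1)%R -> (0 < I t)%R.
Proof. by move=> t0 t1; have /andP[] := hI.1 t (andb_true_intro (conj t0 t1)). Qed.

Lemma qI_lt1 {t} : (0 < t)%R -> (t < 1)%R -> (I t < 1)%R.
Proof. by move=> t0 t1; have /andP[] := hI.1 t (andb_true_intro (conj t0 t1)). Qed.

Lemma qI_mono {s t} : (0 < s)%R -> (s <= t)%R -> (t < 1)%R -> (I s <= I t)%R.
Proof.
move=> s0 st t1; have [_ [_ [_ [h _]]]] := hI.
have t0 : (0 < t)%R by exact: lt_le_trans st.
have s1 : (s < 1)%R by exact: le_lt_trans t1.
have := h s t (in01 _ s0 s1) (in01 _ t0 t1). exact.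
Qed.

Lemma qI_ratio {s t} : (0 < s)%R -> (s <= t)%R -> (t < 1)%R -> (I t / t <= I s / s)%R.
Proof.
move=> s0 st t1; have [_ [_ [_ [_ [_ [_ h]]]]]] := hI.
have t0 : (0 < t)%R by exact: lt_le_trans st.
have s1 : (s < 1)%R by exact: le_lt_trans t1.
exact: h (in01 _ s0 s1) (in01 _ t0 t1) st.
Qed.

Lemma phi_mono {s u} : (0 < s)%R -> (s <= u)%R -> (u < 1)%R -> (s / I s <= u / I u)%R.
Proof.
move=> s0 su u1; have u0 : (0 < u)%R by exact: lt_le_trans su.
have s1 : (s < 1)%R by exact: le_lt_trans u1.
have := qI_ratio s0 su u1.
rewrite !ler_frac //; try exact: qI_pos.
by move=> h; rewrite mulrC [X in (_ <= X)%R]mulrC.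
Qed.

Definition Psi (l : R) : R := (l / I (l / 2))%R.

Lemma phi_Psi {s l} : (0 < s)%R -> (s < l)%R -> (l <= 1)%R -> (s / I s <= Psi l)%R.
Proof.
move=> s0 sl l1; rewrite /Psi.
have l0 : (0 < l)%R by exact: lt_trans sl.
have l20 : (0 < l / 2)%R by rewrite divr_gt0.
have l21 : (l / 2 < 1)%R by lra.
have Il2 : (0 < I (l / 2))%R by exact: qI_pos.
have s1 : (s < 1)%R by lra.
have Is : (0 < I s)%R by exact: qI_pos.
have [sl2|sl2] := leP s (l / 2)%R.
  apply: (le_trans (phi_mono s0 sl2 l21)).
  by rewrite ler_pM2r ?invr_gt0 //; lra.
have : (I (l / 2) <= I s)%R by apply: qI_mono => //; exact: ltW.
move=> hle; rewrite ler_frac //.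
have : (s * I (l / 2) <= l * I s)%R.
  apply: (le_trans (y := (l * I (l/2))%R)).
    by rewrite ler_pM2r //; exact: ltW.
  by rewrite ler_pM2l.
done.
Qed.

Lemma Psi_ge0 l : (0 <= l)%R -> (l <= 1)%R -> (0 <= Psi l)%R.
Proof.
move=> l0 l1; rewrite /Psi; have [->|lp] := eqVneq l 0%R; first by rewrite mul0r.
have lp' : (0 < l)%R by rewrite lt_def lp.
apply: divr_ge0 => //; apply: ltW; apply: qI_pos; lra.
Qed.

End QC.

Section IntMono.
Context {R : realType}.
Notation mu := (@lebesgue_measure R).

Lemma le_int_nm (f g : R -> \bar R) : (forall x, 0 <= f x) ->
  (forall x, f x <= g x) -> \int[mu]_x f x <= \int[mu]_x g x.
Proof.
move=> f0 fg.
have g0 x : 0 <= g x by exact: le_trans (f0 x) (fg x).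
rewrite !ge0_integralTE //.
apply: ge_ereal_sup => _ [h /= hf <-]; apply: ereal_sup_ubound; exists h => //.
by move=> x; exact: le_trans (hf x) (fg x).
Qed.

Lemma le_int_patch (D1 D2 : set R) (f g : R -> \bar R) :
  (forall x, 0 <= (f \_ D1) x) -> (forall x, (f \_ D1) x <= (g \_ D2) x) ->
  \int[mu]_(x in D1) f x <= \int[mu]_(x in D2) g x.
Proof.
by move=> f0 fg; rewrite [X in X <= _]integral_mkcond [X in _ <= X]integral_mkcond; apply: le_int_nm.
Qed.

End IntMono.

Section TIprops.
Context {R : realType} (I : R -> R) (hI : quasiconcave I).

Lemma sup_ge0 (f : R -> \bar R) t : (0 < t)%R -> (t < 1)%R ->
  0 <= ereal_sup [set (s / I s)%:E * rearr f s | s in [set s : R | (t <= s < 1)%R]].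
Proof.
move=> t0 t1; apply: le_trans (ereal_sup_ubound _).
  2: by exists t => //; rewrite /= lexx t1.
apply: mule_ge0; last exact: rearr_ge0.
by rewrite lee_fin divr_ge0 // ltW // (qI_pos _ hI).
Qed.

Lemma TI_ge0 (f : R -> \bar R) t : (0 < t)%R -> (t < 1)%R -> 0 <= TI I f t.
Proof.
move=> t0 t1; apply: mule_ge0; last exact: sup_ge0.
by rewrite lee_fin divr_ge0 // ltW // (qI_pos _ hI).
Qed.

Lemma TI_noninc (f : R -> \bar R) x y : (0 < x)%R -> (x <= y)%R -> (y < 1)%R ->
  TI I f y <= TI I f x.
Proof.
move=> x0 xy y1; have y0 : (0 < y)%R by exact: lt_le_trans xy.
have x1 : (x < 1)%R by exact: le_lt_trans y1.
apply: lee_pmul.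
- by rewrite lee_fin divr_ge0 // ltW // (qI_pos _ hI).
- exact: sup_ge0.
- by rewrite lee_fin; exact: (qI_ratio _ hI).
- apply: ereal_sup_le => _ [s /andP[ys s1] <-]; exists s => //.
  by rewrite /= (le_trans xy ys) s1.
Qed.

End TIprops.

Section Part1.
Context {R : realType} (I : R -> R) (hI : quasiconcave I).
Notation mu := (@lebesgue_measure R).

Lemma in01P (t : R) : (@I01 R) t -> (0 < t)%R /\ (t < 1)%R.
Proof. by rewrite /I01 /= in_itv /= => /andP. Qed.

Lemma rearr_le_noninc (g : R -> \bar R) t :
  (forall x, (0 < x)%R -> (x < 1)%R -> 0 <= g x) ->
  (forall x y, (0 < x)%R -> (x <= y)%R -> (y < 1)%R -> g y <= g x) ->
  (0 < t)%R -> (t < 1)%R -> rearr g t <= g t.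
Proof.
move=> g0 gni t0 t1.
have := g0 t t0 t1; case E : (g t) => [r| |]; last 2 first.
- by move=> _; rewrite leey.
- by [].
rewrite lee_fin => r0; apply: rearr_le => //.
set S := (@I01 R) `&` [set x | r%:E < g x].
have SI : is_interval S.
  move=> a b [/in01P [a0 a1] ha] [/in01P [b0 b1] hb] u /andP[au ub].
  have u0 : (0 < u)%R by exact: lt_le_trans au.
  have u1 : (u < 1)%R by exact: le_lt_trans b1.
  split; first exact: in01.
  by rewrite /=; apply: lt_le_trans hb _; exact: gni.
rewrite -(mu_itv0 _ (ltW t0)).
apply: le_measure.
- by rewrite inE; exact: is_interval_measurable.
- by rewrite inE; exact: measurable_itv.
- move=> x [/in01P [x0 x1] /= hx]; rewrite in_itv /= x0 /=.
  rewrite ltNge; apply/negP => tx.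
  by have := gni _ _ t0 tx x1; rewrite E leNgt hx.
Qed.

Lemma part1 (f : R -> \bar R) :
  mnorm (Itilde I) (TI I f) <= mnorm (Itilde I) f.
Proof.
apply: ge_ereal_sup => _ [t /in01P [t0 t1] <-].
have It0 : (0 < I t)%R by exact: (qI_pos _ hI).
apply: (le_trans (y := (Itilde I t)%:E * TI I f t)).
  apply: lee_wpmul2l; first by rewrite lee_fin /Itilde divr_ge0 // ltW.
  apply: rearr_le_noninc => //.
  - by move=> x x0 x1; exact: (TI_ge0 _ hI).
  - by move=> x y x0 xy y1; exact: (TI_noninc _ hI).
rewrite /TI muleA -EFinM.
have -> : (Itilde I t * (I t / t))%R = 1%R.
  by rewrite /Itilde; field; apply/andP; split; rewrite gt_eqF.
rewrite mul1e; apply: ereal_sup_le => _ [s /andP [ts s1] <-].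
exists s; last by [].
by rewrite /I01 /= in_itv /= s1 andbT; exact: lt_le_trans ts.
Qed.

End Part1.

Section Indic.
Context {R : realType}.
Notation mu := (@lebesgue_measure R).

Lemma indic_itv0 (a x : R) : \1_(`]0%R, a[%classic) x = (if ((0 < x)%R && (x < a)%R) then 1%R else 0%R : R).
Proof.
rewrite indicE; case: ifPn => h.
  by rewrite mem_set //= in_itv /= h.
by rewrite memNset //= in_itv /= (negbTE h).
Qed.

Lemma meas_cindic (c a : R) (D : set R) :
  measurable_fun D (fun x => (c * \1_(`]0%R, a[%classic) x)%:E).
Proof.
by apply/measurable_EFinP; apply: measurable_funM.
Qed.

Lemma int_indic01 (c a : R) : (0 <= c)%R -> (0 <= a)%R -> (a <= 1)%R ->
  \int[mu]_(x in (@I01 R)) (c * \1_(`]0%R, a[%classic) x)%:E = (c * a)%:E.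
Proof.
move=> c0 a0 a1.
under eq_integral do rewrite EFinM.
have mI := (@measI01 R).
have hnn : forall x, (@I01 R) x -> 0 <= ((\1_(`]0%R, a[%classic) x : R))%:E.
  by move=> x _; rewrite lee_fin indicE.
have hm : measurable_fun (@I01 R) (fun x => ((\1_(`]0%R, a[%classic) x : R))%:E).
  apply/measurable_EFinP; exact: measurable_indic (measurable_itv _).
rewrite ge0_integralZl_EFin //.
rewrite integral_indic //.
rewrite setIidl; first by rewrite EFinM; congr (_ * _); exact: mu_itv0.
move=> x /=; rewrite !in_itv /= => /andP[x0 xa]; rewrite /I01 /= in_itv /= x0 /=.
exact: lt_le_trans a1.
Qed.

End Indic.

Section Part2a.
Context {R : realType} (I : R -> R) (hI : quasiconcave I).
Notation mu := (@lebesgue_measure R).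

Lemma part2a :
  (exists2 C : R, (0 < C)%R &
      forall f : R -> \bar R, Mplus f -> L1norm (TI I f) <= C%:E * L1norm f) ->
  (exists2 C : R, (0 < C)%R &
      forall t : R, (0 < t < 1)%R ->
        \int[mu]_(s in `]0%R, t[) (I s / s)%:E <= (C * I t)%:E).
Proof.
move=> [C C0 hC]; exists (2 * C)%R; first by rewrite mulr_gt0.
move=> t /andP[t0 t1].
have It0 : (0 < I t)%R by exact: (qI_pos _ hI).
pose a : R := if (2 * t < 1)%R then (2 * t)%R else 1%R.
have a0 : (0 < a)%R by rewrite /a; case: ifP => _ //; rewrite mulr_gt0.
have a1 : (a <= 1)%R by rewrite /a; case: ifP => // /ltW.
have ta : (t < a)%R by rewrite /a; case: ifP => _ //; lra.
have a2t : (a <= 2 * t)%R by rewrite /a; case: ifP => //; rewrite ltNge => /negbFE.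
pose c : R := (I t / t)%R.
have c0 : (0 < c)%R by rewrite divr_gt0.
pose f := fun x : R => (c * \1_(`]0%R, a[%classic) x)%:E.
have Mf : Mplus f.
  split; first exact: meas_cindic.
  by move=> x _; rewrite lee_fin mulr_ge0 // ?ltW // indicE.
have L1f : L1norm f = (c * a)%:E by apply: int_indic01 => //; exact: ltW.
have rf : c%:E <= rearr f t.
  apply: le_ereal_inf_tmp => _ [l [l0 hl] <-]; rewrite lee_fin.
  rewrite leNgt; apply/negP => lc.
  have : distf f l = a%:E.
    rewrite /distf.
    have -> : (@I01 R) `&` [set x | l%:E < f x] = `]0%R, a[%classic.
      apply/seteqP; split => x /=.
        move=> [_]; rewrite /f indic_itv0; case: ifP => //.
        by rewrite mulr0 lte_fin => _ /lt_le_trans /(_ l0); rewrite ltxx.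
      rewrite in_itv /= => /andP[x0 xa]; split.
        by rewrite /I01 /= in_itv /= x0 /=; exact: lt_le_trans a1.
      by rewrite /f indic_itv0 x0 xa /= mulr1 lte_fin.
    exact: mu_itv0 (ltW a0).
  by move=> h; move: hl; rewrite h lee_fin leNgt ta.
have lowTI : forall x, (0 < x)%R -> (x < t)%R -> (I x / x)%:E <= TI I f x.
  move=> x x0 xt; have x1 : (x < 1)%R by exact: lt_trans t1.
  have Ix0 : (0 < I x)%R by exact: (qI_pos _ hI).
  rewrite /TI -[X in X <= _]mule1; apply: lee_wpmul2l; first by rewrite lee_fin divr_ge0 // ltW.
  apply: le_trans (ereal_sup_ubound _); last first.
    by exists t => //; rewrite /= t1 andbT ltW.
  have -> : 1 = (t / I t)%:E * c%:E.
    by rewrite -EFinM /c; congr EFin; field; apply/andP; split; rewrite gt_eqF.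
  by apply: lee_wpmul2l => //; rewrite lee_fin divr_ge0 // ltW.
apply: (le_trans (y := L1norm (TI I f))).
  rewrite /L1norm; apply: le_int_patch => x; rewrite !patchE.
    case: ifPn => // /set_mem; rewrite /= in_itv /= => /andP[x0 xt].
    have x1 : (x < 1)%R by exact: lt_trans t1.
    by rewrite lee_fin divr_ge0 // ltW // (qI_pos _ hI).
  case: ifPn => [/set_mem|_]; last first.
    by case: ifPn => // /set_mem /in01P [x0 x1]; exact: (TI_ge0 _ hI).
  rewrite /= in_itv /= => /andP[x0 xt].
  have x1 : (x < 1)%R by exact: lt_trans t1.
  rewrite mem_set; first exact: lowTI.
  by rewrite /I01 /= in_itv /= x0 x1.
apply: (le_trans (hC f Mf)); rewrite L1f -EFinM lee_fin.
have -> : (2 * C * I t = C * (c * (2 * t)))%R.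
  by rewrite /c; field; rewrite gt_eqF.
by rewrite ler_pM2l // ler_pM2l.
Qed.

End Part2a.

Section MeasNoninc.
Context {R : realType}.

Lemma meas_noninc (g : R -> R) :
  (forall x y, (0 < x)%R -> (x <= y)%R -> (y < 1)%R -> (g y <= g x)%R) ->
  measurable_fun (@I01 R) g.
Proof.
move=> gni.
apply: (measurability (@RGenCInfty.G R)) => [|/= _ [_] [r] -> <-].
  exact: RGenCInfty.measurableE.
apply: is_interval_measurable => a b [/in01P [a0 a1] ha] [/in01P [b0 b1] hb] u /andP[au ub].
have u0 : (0 < u)%R by exact: lt_le_trans au.
have u1 : (u < 1)%R by exact: le_lt_trans b1.
split; first exact: in01.
move: hb; rewrite /= !in_itv /= !andbT => hb.
exact: le_trans hb (gni _ _ u0 ub b1).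
Qed.
End MeasNoninc.

Section Part2b.
Context {R : realType} (I : R -> R) (hI : quasiconcave I).
Notation mu := (@lebesgue_measure R).
Variable K : R.
Hypothesis K0 : (0 < K)%R.
Hypothesis hK : forall t : R, (0 < t < 1)%R ->
  \int[mu]_(s in `]0%R, t[) (I s / s)%:E <= (K * I t)%:E.

Let h (x : R) : R := (I x / x)%R.

Lemma h_pos {x} : (0 < x)%R -> (x < 1)%R -> (0 < h x)%R.
Proof. by move=> x0 x1; rewrite /h divr_gt0 // (qI_pos _ hI). Qed.

Lemma meas_h : measurable_fun (@I01 R) h.
Proof. by apply: meas_noninc => x y x0 xy y1; exact: (qI_ratio _ hI). Qed.

Lemma meas_hind (c l : R) :
  measurable_fun (@I01 R) (fun x => (c * (h x * \1_(`]0%R, l[%classic) x))%:E).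
Proof.
apply/measurable_EFinP; apply: measurable_funM => //.
apply: measurable_funM; first exact: meas_h.
exact: measurable_indic (measurable_itv _).
Qed.

Lemma lemH (l : R) : (0 < l)%R -> (l <= 1)%R ->
  \int[mu]_(x in (@I01 R)) (1 * (h x * \1_(`]0%R, l[%classic) x))%:E
    <= ((K + 2) * I (l / 2))%:E.
Proof.
move=> l0 l1; set m := (l / 2)%R.
have m0 : (0 < m)%R by rewrite divr_gt0.
have m1 : (m < 1)%R by rewrite /m; lra.
have Im0 : (0 < I m)%R by exact: (qI_pos _ hI).
set c := (2 * I m / l)%R.
have c0 : (0 <= c)%R by rewrite /c divr_ge0 // ?ltW // mulr_gt0.
apply: (le_trans (y := \int[mu]_(x in (@I01 R))
   ((1 * (h x * \1_(`]0%R, m[%classic) x))%:E + (c * \1_(`]0%R, l[%classic) x)%:E))).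
  apply: ge0_le_integral.
  - exact: measI01.
  - move=> x /in01P [x0 x1]; rewrite lee_fin mul1r; apply: mulr_ge0.
      exact: ltW (h_pos x0 x1).
    by rewrite indicE.
  - exact: meas_hind.
  - apply: emeasurable_funD; first exact: meas_hind.
    exact: meas_cindic.
  - move=> x /in01P [x0 x1]; rewrite !indic_itv0 x0 /= !mul1r.
    have hx := h_pos x0 x1.
    case: (ltP x l) => xl; last by rewrite !mulr0 adde0 lee_fin; case: ifP; rewrite ?mulr1 ?mulr0 // ltW.
    rewrite mulr1.
    case: (ltP x m) => xm.
      by rewrite mulr1; apply: leeDl; rewrite lee_fin mulr1.
    rewrite mulr0 add0e lee_fin mulr1 /c /h.
    apply: (le_trans (qI_ratio _ hI m0 xm x1)).
    by rewrite le_eqVlt; apply/orP; left; apply/eqP; rewrite /m; field; rewrite gt_eqF.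
rewrite ge0_integralD.
- have -> : ((K + 2) * I m = K * I m + c * l)%R.
    by rewrite /c; field; rewrite gt_eqF.
  rewrite EFinD; apply: leeD.
    apply: (le_trans (y := \int[mu]_(x in `]0%R, m[) (I x / x)%:E)).
      apply: le_int_patch => x; rewrite !patchE.
        case: ifPn => // /set_mem /in01P [x0 x1].
        by rewrite lee_fin mul1r mulr_ge0 ?indicE // ltW // h_pos.
      case: ifPn => [/set_mem /in01P [x0 x1]|_]; last first.
        by case: ifPn => // /set_mem; rewrite /= in_itv /= => /andP[x0 xm]; rewrite lee_fin divr_ge0 // ltW // (qI_pos _ hI) //; exact: lt_trans m1.
      rewrite indic_itv0 x0 /=; case: ifPn => xm.
        by rewrite mem_set ?mul1r ?mulr1 //= in_itv /= x0.
      by rewrite mulr0 mulr0; case: ifPn => // /set_mem; rewrite /= in_itv /= => /andP[x0' xm']; rewrite lee_fin divr_ge0 // ltW // (qI_pos _ hI).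
    by apply: hK; rewrite m0 m1.
  by rewrite int_indic01 // ltW.
- exact: measI01.
- move=> x /in01P [x0 x1]; rewrite lee_fin mul1r; apply: mulr_ge0.
    exact: ltW (h_pos x0 x1).
  by rewrite indicE.
- exact: meas_hind.
- by move=> x _; rewrite lee_fin mulr_ge0 ?indicE.
- exact: meas_cindic.
Qed.


Lemma lemG (c l : R) : (0 <= c)%R -> (0 <= l)%R -> (l <= 1)%R ->
  \int[mu]_(x in (@I01 R)) ((c * Psi I l) * (h x * \1_(`]0%R, l[%classic) x))%:E
    <= ((K + 2) * c * l)%:E.
Proof.
move=> c0 l0 l1; have [->|lp] := eqVneq l 0%R.
  rewrite integral0_eq ?mulr0 //.
  by move=> x _; rewrite indic_itv0; case: ifP => [/andP[/lt_trans h1 /h1]|_]; rewrite ?ltxx ?mulr0.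
have lp' : (0 < l)%R by rewrite lt_def lp.
have Im0 : (0 < I (l / 2))%R by apply: (qI_pos _ hI); [rewrite divr_gt0 | lra].
have cP : (0 <= c * Psi I l)%R by rewrite mulr_ge0 // Psi_ge0.
under eq_integral do rewrite EFinM -[(h _ * _)%R]mul1r.
rewrite ge0_integralZl_EFin //.
- apply: (le_trans (y := (c * Psi I l)%:E * ((K + 2) * I (l / 2))%:E)).
    by apply: lee_wpmul2l; [rewrite lee_fin | exact: lemH].
  rewrite -EFinM lee_fin /Psi le_eqVlt; apply/orP; left; apply/eqP.
  by field; rewrite gt_eqF.
- exact: measI01.
- move=> x /in01P [x0 x1]; rewrite lee_fin mul1r; apply: mulr_ge0.
    exact: ltW (h_pos x0 x1).
  by rewrite indicE.
- exact: meas_hind.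
Qed.

End Part2b.

Section Layer.
Context {R : realType}.
Notation mu := (@lebesgue_measure R).

Lemma sum_constE (e : R) N : \sum_(0 <= i < N) e%:E = (N%:R * e)%:E.
Proof. by rewrite sumEFin sumr_const_nat subn0 mulr_natl. Qed.

Lemma exists_nat_gt (r e : R) : (0 < e)%R -> exists N : nat, (r < N.+1%:R * e)%R.
Proof.
move=> e0; have := archi_boundP (normr_ge0 (r / e)%R); set b := Num.bound _ => hb.
exists b; rewrite -ltr_pdivrMr //; apply: le_lt_trans (ler_norm _) _.
by apply: lt_trans hb _; rewrite ltr_nat.
Qed.

Definition Lam (f : R -> \bar R) (e : R) (n : nat) : R :=
  if n is k.+1 then fine (distf f (n%:R * e)) else 1%R.

Lemma Lam_ge0 f e n : (0 <= Lam f e n)%R.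
Proof. by case: n => [|k] //=; rewrite fine_ge0 // distf_ge0. Qed.

Lemma Lam_le1 f e n : measurable_fun (@I01 R) f -> (Lam f e n <= 1)%R.
Proof.
move=> mf; case: n => [|k] //=; rewrite -lee_fin -distf_fin //.
exact: distf_le1.
Qed.

Lemma Lam_gt {f e n s} : (0 < n)%N -> (0 <= e)%R -> measurable_fun (@I01 R) f ->
  (n%:R * e)%:E < rearr f s -> (s < Lam f e n)%R.
Proof.
case: n => [//|k] _ e0 mf h; rewrite /Lam -lte_fin -distf_fin //.
apply: rearr_gt h; exact: mulr_ge0.
Qed.

Lemma lemU (f : R -> \bar R) (e s : R) : measurable_fun (@I01 R) f ->
  (0 < e)%R -> (0 < s)%R -> (s < 1)%R ->
  rearr f s <= \sum_(n <oo) (e * \1_(`]0%R, Lam f e n[%classic) s)%:E.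
Proof.
move=> mf e0 s0 s1.
set S := \sum_(n <oo) _.
have t0 n : 0 <= (e * \1_(`]0%R, Lam f e n[%classic) s)%:E.
  by rewrite lee_fin mulr_ge0 ?indicE // ltW.
have Q : forall N, (forall k, (0 < k <= N)%N -> (k%:R * e)%:E < rearr f s) ->
    (N.+1%:R * e)%:E <= S.
  move=> N hN; apply: le_trans (@nneseries_lim_ge _ _ xpredT 0%N N.+1 _); last first.
    by move=> n _ _; exact: t0.
  rewrite -sum_constE le_eqVlt; apply/orP; left; apply/eqP.
  apply: eq_big_nat => n /andP[_ nN].
  rewrite indic_itv0 s0 /=; case: n nN => [_|k kN].
    by rewrite /= s1 mulr1.
  have hk : (0 < k.+1 <= N)%N by rewrite ltnS in kN; rewrite kN.
  by rewrite (Lam_gt (ltn0Sn k) (ltW e0) mf (hN _ hk)) mulr1.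
case E : (rearr f s) => [y| |]; last 2 first.
- have Sy : S = +oo; last by rewrite Sy.
  case ES : S => [r| |]; last 2 first.
  + by [].
  + have h0 : forall k, (0 < k <= 0)%N -> (k%:R * e)%:E < rearr f s.
      by move=> [|k] /andP[].
    by have := Q 0%N h0; rewrite ES leNgt ltNyr.
  have [N hN] := exists_nat_gt r e e0.
  have hall : forall k, (0 < k <= N)%N -> (k%:R * e)%:E < rearr f s.
    by move=> k _; rewrite E ltry.
  have := Q N hall; rewrite ES lee_fin.
  by rewrite leNgt hN.
- by have := rearr_ge0 f s; rewrite E.
have y0 : (0 <= y)%R by rewrite -lee_fin -E rearr_ge0.
have exP : exists N : nat, (y <= N.+1%:R * e)%R.
  by have [N hN] := exists_nat_gt y e e0; exists N; exact: ltW.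
case: (ex_minnP exP) => N PN minN.
apply: (le_trans (y := (N.+1%:R * e)%:E)); first by rewrite lee_fin.
apply: Q => k /andP[k0 kN]; rewrite E lte_fin ltNge; apply/negP => yk.
have : (N <= k.-1)%N by apply: minN; rewrite prednK.
by case: k k0 kN yk => // k _ kN _ /=; rewrite leqNgt kN.
Qed.

End Layer.

Section Lower.
Context {R : realType}.
Notation mu := (@lebesgue_measure R).

Lemma nneseries_le_part (u : nat -> \bar R) y : (forall n, 0 <= u n) ->
  (forall N, \sum_(0 <= k < N) u k <= y) -> \sum_(k <oo) u k <= y.
Proof.
move=> u0 hu; apply: lime_le.
  by apply: is_cvg_nneseries => n _ _; exact: u0.
exact: nearW.
Qed.

Lemma lemL (f : R -> \bar R) (e : R) : Mplus f -> (0 < e)%R ->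
  \sum_(k <oo) (e * Lam f e k.+1)%:E <= L1norm f.
Proof.
move=> [mf f0] e0.
pose A k := (@I01 R) `&` [set x | (k.+1%:R * e)%:E < f x].
have mA k : measurable (A k) by exact: meas_level.
have AI k : A k `<=` (@I01 R) by move=> x [].
have hnn k x : 0 <= (e * \1_(A k) x)%:E by rewrite lee_fin mulr_ge0 ?indicE // ltW.
have step : \int[mu]_(x in (@I01 R)) (\sum_(k <oo) (e * \1_(A k) x)%:E) =
    \sum_(k <oo) (e * Lam f e k.+1)%:E.
  rewrite integral_nneseries //.
  - apply: eq_eseriesr => k _.
    under eq_integral do rewrite EFinM.
    have mI := (@measI01 R).
    have hnn' : forall x, (@I01 R) x -> 0 <= ((\1_(A k) x : R))%:E.
      by move=> x _; rewrite lee_fin indicE.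
    have hm : measurable_fun (@I01 R) (fun x => ((\1_(A k) x : R))%:E).
      apply/measurable_EFinP; exact: measurable_indic.
    have mAk := mA k; have e0' : (0 <= e)%R := ltW e0.
    rewrite ge0_integralZl_EFin //.
    rewrite integral_indic //.
    by rewrite setIidl // EFinM /Lam -distf_fin.
  - exact: measI01.
  - move=> k; apply/measurable_EFinP; apply: measurable_funM; first exact: measurable_cst.
    exact: measurable_indic (mA k).
rewrite -step /L1norm; apply: le_int_patch => x; rewrite !patchE.
  by case: ifPn => // _; apply: nneseries_ge0 => k _ _; exact: hnn.
case: ifPn => // /set_mem xI.
apply: nneseries_le_part => [k|N]; first exact: hnn.
elim: N => [|N IH]; first by rewrite big_geq // f0 // (in01P _ xI).
case: (boolP ((N.+1%:R * e)%:E < f x)) => hN.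
  rewrite (eq_big_nat _ _ (F2 := fun _ => e%:E)) ?sum_constE; first exact: ltW.
  move=> k /andP[_ kN]; rewrite indicE mem_set ?mulr1 //; split => //=.
  apply: le_lt_trans hN; rewrite lee_fin ler_pM2r // ler_nat.
  by rewrite ltnS in kN.
rewrite big_nat_recr //= indicE memNset ?mulr0 ?adde0 //.
by move=> [_ /= h]; move: hN; rewrite h.
Qed.

End Lower.

Section Part2bFinal.
Context {R : realType} (I : R -> R) (hI : quasiconcave I).
Notation mu := (@lebesgue_measure R).

Lemma ePsi_ge0 (f : R -> \bar R) e n : measurable_fun (@I01 R) f -> (0 < e)%R ->
  (0 <= e * Psi I (Lam f e n))%R.
Proof.
move=> mf e0; apply: mulr_ge0; first exact: ltW.
apply: (Psi_ge0 _ hI); [exact: Lam_ge0 | exact: Lam_le1].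
Qed.

Lemma lemB (f : R -> \bar R) (e x : R) : Mplus f -> (0 < e)%R ->
  (0 < x)%R -> (x < 1)%R ->
  TI I f x <= \sum_(n <oo)
     ((e * Psi I (Lam f e n)) * (I x / x * \1_(`]0%R, Lam f e n[%classic) x))%:E.
Proof.
move=> [mf f0] e0 x0 x1.
have Ix0 : (0 < I x)%R by exact: (qI_pos _ hI).
have hx0 : (0 <= I x / x)%R by rewrite divr_ge0 // ltW.
have Tnn n : 0 <= ((e * Psi I (Lam f e n)) * \1_(`]0%R, Lam f e n[%classic) x)%:E.
  rewrite lee_fin; apply: mulr_ge0; last by rewrite indicE.
  exact: ePsi_ge0.
rewrite /TI.
apply: (le_trans (y := (I x / x)%:E * \sum_(n <oo)
   ((e * Psi I (Lam f e n)) * \1_(`]0%R, Lam f e n[%classic) x)%:E)).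
  apply: lee_wpmul2l; first by rewrite lee_fin.
  apply: ge_ereal_sup => _ [s /andP[xs s1] <-].
  have s0 : (0 < s)%R by exact: lt_le_trans xs.
  have Is0 : (0 < I s)%R by exact: (qI_pos _ hI).
  apply: (le_trans (y := (s / I s)%:E *
     \sum_(n <oo) (e * \1_(`]0%R, Lam f e n[%classic) s)%:E)).
    apply: lee_wpmul2l; first by rewrite lee_fin divr_ge0 // ltW.
    exact: lemU.
  rewrite -nneseriesZl; last by move=> n _; rewrite lee_fin mulr_ge0 ?indicE // ltW.
  apply: lee_nneseries.
    move=> n _ _; rewrite -EFinM lee_fin; apply: mulr_ge0; first by rewrite divr_ge0 // ltW.
    by apply: mulr_ge0; [exact: ltW | rewrite indicE].
  move=> n _; rewrite -EFinM lee_fin indic_itv0 s0 /=.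
  case: ifPn => sl; last first.
    rewrite !mulr0; apply: mulr_ge0; last by rewrite indicE.
    exact: ePsi_ge0.
  rewrite indic_itv0 x0 (le_lt_trans xs sl) /= !mulr1 [X in (_ <= X)%R]mulrC ler_pM2r //.
  apply: (phi_Psi _ hI) => //; exact: Lam_le1.
rewrite -nneseriesZl; last by move=> n _; exact: Tnn.
apply: lee_nneseries; first by move=> n _ _; rewrite -EFinM lee_fin mulr_ge0 // -lee_fin.
by move=> n _; rewrite -EFinM mulrCA.
Qed.


Lemma part2b (K : R) : (0 < K)%R ->
  (forall t : R, (0 < t < 1)%R ->
     \int[mu]_(s in `]0%R, t[) (I s / s)%:E <= (K * I t)%:E) ->
  exists2 C : R, (0 < C)%R &
      forall f : R -> \bar R, Mplus f -> L1norm (TI I f) <= C%:E * L1norm f.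
Proof.
move=> K0 hK; exists (K + 2)%R; first lra.
move=> f Mf; have [mf f0] := Mf.
have K20 : (0 < K + 2)%R by lra.
apply/lee_addgt0Pr => d d0.
pose e := (d / (K + 2))%R.
have e0 : (0 < e)%R by rewrite divr_gt0.
pose G n x := ((e * Psi I (Lam f e n)) * (I x / x * \1_(`]0%R, Lam f e n[%classic) x))%:E.
have Gnn n x : (@I01 R) x -> 0 <= G n x.
  move=> /in01P [x0 x1]; rewrite lee_fin; apply: mulr_ge0; first exact: ePsi_ge0.
  apply: mulr_ge0; last by rewrite indicE.
  by rewrite divr_ge0 // ltW // (qI_pos _ hI).
have step1 : L1norm (TI I f) <= \int[mu]_(x in (@I01 R)) \sum_(n <oo) G n x.
  rewrite /L1norm; apply: le_int_patch => x; rewrite !patchE.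
    by case: ifPn => // /set_mem /in01P [x0 x1]; exact: (TI_ge0 _ hI).
  case: ifPn => // /set_mem xI; have [x0 x1] := in01P _ xI.
  exact: lemB.
have step2 : \int[mu]_(x in (@I01 R)) \sum_(n <oo) G n x =
    \sum_(n <oo) \int[mu]_(x in (@I01 R)) G n x.
  apply: integral_nneseries.
  - exact: measI01.
  - move=> n; exact: (meas_hind _ hI).
  - by move=> n x xI; exact: Gnn.
have step3 : \sum_(n <oo) \int[mu]_(x in (@I01 R)) G n x <=
    \sum_(n <oo) ((K + 2) * e * Lam f e n)%:E.
  apply: lee_nneseries.
    by move=> n _ _; apply: integral_ge0 => x xI; exact: Gnn.
  move=> n _; rewrite /G; apply: (lemG _ hI K hK e (Lam f e n)); first exact: ltW.
    exact: Lam_ge0.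
  exact: Lam_le1.
have step4 : \sum_(n <oo) ((K + 2) * e * Lam f e n)%:E =
    (K + 2)%:E * (e%:E + \sum_(k <oo) (e * Lam f e k.+1)%:E).
  under eq_eseriesr => n _ do rewrite -mulrA EFinM.
  rewrite nneseriesZl; last by move=> n _; rewrite lee_fin mulr_ge0 ?Lam_ge0 // ltW.
  congr (_ * _).
  rewrite nneseries_recl //; last by move=> n _; rewrite lee_fin mulr_ge0 ?Lam_ge0 // ltW.
  rewrite /= mulr1; congr (_ + _).
  rewrite -nneseries_addn; last by move=> n; rewrite lee_fin mulr_ge0 ?Lam_ge0 // ltW.
  by apply: eq_eseriesr => n _; rewrite addn1.
have step5 := lemL f e Mf e0.
apply: (le_trans step1); rewrite step2; apply: (le_trans step3); rewrite step4.
have L0 : 0 <= L1norm f by apply: integral_ge0 => x /in01P [x0 x1]; apply: f0; rewrite x0.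
apply: (le_trans (y := (K + 2)%:E * (e%:E + L1norm f))).
  apply: lee_wpmul2l; first by rewrite lee_fin ltW.
  by apply: leeD2l.
have e0E : 0 <= e%:E by rewrite lee_fin ltW.
rewrite ge0_muleDr // addeC -EFinM.
have -> : ((K + 2) * e)%R = d by rewrite /e; field; rewrite gt_eqF.
done.
Qed.

End Part2bFinal.

Theorem theorem3p5 (R : realType) (I : R -> R) :
  quasiconcave I ->
  (exists2 C : R, (0 < C)%R &
     forall f : R -> \bar R, Mplus f ->
       mnorm (Itilde I) (TI I f) <= C%:E * mnorm (Itilde I) f)
  /\
  ((exists2 C : R, (0 < C)%R &
      forall f : R -> \bar R, Mplus f -> L1norm (TI I f) <= C%:E * L1norm f)
   <->
   (exists2 C : R, (0 < C)%R &
      forall t : R, (0 < t < 1)%R ->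
        \int[@lebesgue_measure R]_(s in `]0%R, t[) (I s / s)%:E
          <= (C * I t)%:E)).
Proof.
move=> hI; split.
  by exists 1%R => // f _; rewrite mul1e; exact: part1.
split; first exact: part2a.
by move=> [K K0 hK]; exact: (part2b _ hI K K0 hK).
Qed.
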